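(* Let $n\geqslant 2$ and $c\geqslant 1$ be integers and let $\Gamma$ be an abelian group of order $2nc$. A diagonal $\mathrm{MRS}_\Gamma(n;2;c)$ exists if and only if $\Gamma$ contains an element of order $n$.
   Context: For positive integers $m,n,s,k,c$ and an abelian group $\Gamma$ of order $nkc$, an $\mathrm{MRS}_\Gamma(m,n;s,k;c)$ is a set of $c$ partially filled $m\times n$ arrays (some cells may be empty) with entries in $\Gamma$ such that: every element of $\Gamma$ appears exactly once and in a unique array; in every array each row contains exactly $s$ filled cells and each column contains exactly $k$ filled cells; and there exist $\omega,\delta\in\Gamma$ such that in every array each row sum is $\omega$ and each column sum is $\delta$. $\mathrm{MRS}_\Gamma(n;k;c)$ denotes $\mathrm{MRS}_\Gamma(n,n;k,k;c)$. In an $n\times n$ array, for $0\leqslant \ell\leqslant n-1$ the diagonal $D_\ell$ is the set of cells $(i,j)$ with $j-i\equiv \ell\pmod n$. An $\mathrm{MRS}_\Gamma(n;k;c)$ is diagonal if, in each of its arrays, the filled cells are exactly the cells of $k$ consecutive diagonals $D_{t},D_{t+1},\ldots,D_{t+k-1}$ (indices modulo $n$). *)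

(* Defs.v *)
From HB Require Import structures.
From mathcomp Require Import all_boot all_order all_algebra all_fingroup.
Set Implicit Arguments. Unset Strict Implicit. Unset Printing Implicit Defensive.
Import GRing.Theory.
Local Open Scope ring_scope.

(* A family of c partially filled n x n arrays with entries in G:
   A a i j = None  : cell (i,j) of array a is empty,
   A a i j = Some g: cell (i,j) of array a contains g. *)
Definition arrays (G : Type) (m n c : nat) := 'I_c -> 'I_m -> 'I_n -> option G.

Definition is_MRS (G : finZmodType) (m n s k c : nat) (A : arrays G m n c) : Prop :=
  (forall g : G, #|[set x : 'I_c * 'I_m * 'I_n | A x.1.1 x.1.2 x.2 == Some g]| = 1%N)
  /\ (forall a i, #|[set j | A a i j != None]| = s)
  /\ (forall a j, #|[set i | A a i j != None]| = k)
  /\ exists omega delta : G,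
       (forall a i, \sum_(j < n) odflt 0 (A a i j) = omega)
    /\ (forall a j, \sum_(i < m) odflt 0 (A a i j) = delta).

Definition is_MRS_sq (G : finZmodType) (n k c : nat) (A : arrays G n n c) : Prop :=
  @is_MRS G n n k k c A.

Definition on_diag (n : nat) (i j : 'I_n) (l : nat) : bool :=
  ((j + n - i) %% n == l %% n)%N.

Definition is_diagonal (G : Type) (n k c : nat) (A : arrays G n n c) : Prop :=
  forall a : 'I_c, exists t : 'I_n, forall i j : 'I_n,
    isSome (A a i j) = [exists s : 'I_k, on_diag i j (t + s)].

(* Main.v *)
Require Import Defs.
From mathcomp Require Import all_boot all_order all_algebra all_fingroup all_solvable.
Set Implicit Arguments. Unset Strict Implicit. Unset Printing Implicit Defensive.
Import GRing.Theory FinRing.Theory.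
Local Open Scope ring_scope.

Section Zp.
Variable n' : nat.
Local Notation n := n'.+2.

Lemma on_diag_eq (i j : 'I_n) (l : nat) :
  on_diag i j l = (j == i + inZp l).
Proof.
rewrite /on_diag -val_eqE /= modnDmr.
have ii : (i < n)%N := ltn_ord i.
have jj : (j < n)%N := ltn_ord j.
rewrite -(eqn_modDl i) addnBA; last by apply: leq_trans (ltnW ii) (leq_addl _ _).
by rewrite addnC addnK modnDr [(j %% n)%N]modn_small.
Qed.

Lemma inZp_ord (t : 'I_n) : inZp t = t.
Proof. by apply: val_inj => /=; rewrite modn_small. Qed.

Lemma inZpS k : inZp k.+1 = inZp k + 1 :> 'I_n.
Proof. by apply: val_inj => /=; rewrite modnDml [(1 %% n)%N]modn_small // addn1. Qed.

Lemma inZp0 : inZp 0 = 0 :> 'I_n.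
Proof. by apply: val_inj. Qed.

Lemma inZpn : inZp n = 0 :> 'I_n.
Proof. by apply: val_inj => /=; rewrite modnn. Qed.

Lemma val1 : val (1 : 'I_n) = 1%N.
Proof. by rewrite /= modn_small. Qed.

Lemma one_neq0 : (1 : 'I_n) != 0.
Proof. by rewrite -val_eqE val1. Qed.

Lemma ex_diag2 (i j : 'I_n) l :
  [exists s : 'I_2, on_diag i j (l + s)] = (j == i + inZp l) || (j == i + inZp l + 1).
Proof.
apply/existsP/orP.
  case=> -[[|[|s]] //= _]; rewrite on_diag_eq ?addn0 ?addn1 ?inZpS ?addrA; by [left|right].
case=> h; [exists ord0 | exists (Ordinal (isT : (1 < 2)%N))];
  by rewrite on_diag_eq /= ?addn0 ?addn1 ?inZpS ?addrA.
Qed.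

Lemma sum2 (G : zmodType) (f : 'I_n -> G) p q : p != q ->
  (forall k, k != p -> k != q -> f k = 0) -> \sum_k f k = f p + f q.
Proof.
move=> pq h; rewrite (bigD1 p) //= (bigD1 q) /= ?(eq_sym q) // big1 ?addr0 //.
by move=> k /andP [] /h.
Qed.

Variables (G : zmodType) (d : G).
Hypothesis hd : d *+ n = 0.

Lemma mulrn_modn k : d *+ (k %% n) = d *+ k.
Proof. by rewrite {2}(divn_eq k n) mulrnDr mulnC mulrnA hd mul0rn add0r. Qed.

Lemma phiD (i j : 'I_n) : d *+ (i + j)%R = d *+ i + d *+ j.
Proof. by rewrite /= mulrn_modn mulrnDr. Qed.

Lemma phiN (i : 'I_n) : d *+ (- i)%R = - (d *+ i).
Proof.
rewrite /= mulrn_modn; apply/eqP; rewrite -subr_eq0 opprK -mulrnDr subnK ?hd //.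
exact: ltnW (ltn_ord i).
Qed.

Lemma phiB (i j : 'I_n) : d *+ (i - j)%R = d *+ i - d *+ j.
Proof. by rewrite phiD phiN. Qed.

Lemma phi1 : d *+ (nat_of_ord (1 : 'I_n)) = d.
Proof. by rewrite val1. Qed.
End Zp.

Lemma aux (G : zmodType) (xa xb om di dj : G) :
  xa + di = om - xb - dj -> xa + xb - om = - (di + dj).
Proof.
move=> e; rewrite -[xa](addrK di) e.
rewrite (addrAC _ (- di)) (addrAC _ (- dj)) subrK.
rewrite (addrAC _ (- di)) (addrAC _ (- dj)) subrr add0r opprD addrC //.
Qed.

Section Greedy.
Variables (n' c : nat) (G : finZmodType) (d om : G).
Local Notation n := n'.+2.
Hypothesis hd : d *+ n = 0.
Hypothesis hom : forall (z : G) (i : nat), z *+ 2 - om != d *+ i.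
Hypothesis cG : #|G| = (2 * n * c)%N.

Definition F (x : nat -> G) (a : nat) (i : 'I_n) (b : bool) : G :=
  if b then om - x a - d *+ i else x a + d *+ i.

Definition Cond k (x : nat -> G) :=
  (forall a b, (a < k)%N -> (b < k)%N -> a != b -> forall i : 'I_n, x a != x b + d *+ i)
  /\ (forall a b, (a < k)%N -> (b < k)%N -> forall i : 'I_n, x a + x b - om != d *+ i).

Lemma greedy k : (k <= c)%N -> exists x, Cond k x.
Proof.
elim: k => [_|k IH kc].
  by exists (fun _ => 0); split.
have [x [C1 C2]] := IH (ltnW kc).
pose U := [set F x p.1.1 p.1.2 p.2 | p : 'I_k * 'I_n * bool].
have [y yU] : exists y, y \notin U.
  case: (pickP (fun y => y \notin U)) => [y hy|h]; first by exists y.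
  have : [set: G] \subset U.
    by apply/subsetP => y _; have := h y; rewrite /=; case: (y \in U).
  move/subset_leq_card; rewrite cardsT cG.
  move/(leq_trans)/(_ (leq_imset_card _ _)).
  rewrite !card_prod !card_ord card_bool => h2.
  have : (2 * n * c <= 2 * n * k)%N.
    apply: (leq_trans h2); rewrite (_ : (k * n * 2 = 2 * n * k)%N) ?leqnn //.
    by rewrite mulnC mulnA mulnAC.
  rewrite leq_pmul2l ?muln_gt0 // => /(leq_trans kc); by rewrite ltnn.
exists (fun m => if m == k then y else x m).
have inU : forall (a : nat) (i : 'I_n) b, (a < k)%N -> F x a i b \in U.
  by move=> a i b ha; apply/imsetP; exists (Ordinal ha, i, b).
split.
  move=> a b; rewrite !ltnS (leq_eqVlt a) (leq_eqVlt b) => /orP[/eqP-> | ha] /orP[/eqP-> | hb];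
    rewrite ?eqxx ?(ltn_eqF ha) ?(ltn_eqF hb) // => ab i.
  - by apply: contraNneq yU => ->; apply: (inU b i false).
  - apply: contraNneq yU => e.
    have -> : y = x a + d *+ (- i)%R by rewrite phiN // e addrK.
    exact: (inU a _ false).
  - exact: C1.
move=> a b; rewrite !ltnS (leq_eqVlt a) (leq_eqVlt b) => /orP[/eqP-> | ha] /orP[/eqP-> | hb];
    rewrite ?eqxx ?(ltn_eqF ha) ?(ltn_eqF hb) // => i.
- by rewrite -mulr2n.
- apply: contraNneq yU => e.
  have -> : y = om - x b - d *+ (- i)%R.
    by rewrite phiN // -e opprK addrC !addrA subrK addrK.
  exact: (inU b _ true).
- apply: contraNneq yU => e.
  have -> : y = om - x a - d *+ (- i)%R.
    by rewrite phiN // -e opprK [x a + y]addrC [RHS]addrC !addrA subrK addrK.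
  exact: (inU a _ true).
- exact: C2.
Qed.

Hypothesis hinj : forall i j : 'I_n, d *+ i = d *+ j -> i = j.

Lemma F_inj x : Cond c x ->
  injective (fun p : 'I_c * 'I_n * bool => F x p.1.1 p.1.2 p.2).
Proof.
case=> C1 C2.
have ff : forall (a a' : 'I_c) (i i' : 'I_n),
    x a + d *+ i = x a' + d *+ i' -> a = a' /\ i = i'.
  move=> a a' i i' e.
  have aa : a = a'.
    apply/eqP; apply: contraT => ne.
    have := C1 a a' (ltn_ord a) (ltn_ord a') ne (i' - i)%R.
    by rewrite phiB // addrA -e addrK eqxx.
  split=> //; apply: hinj; apply: (@addrI _ (x a)); by rewrite e aa.
have ft : forall (a a' : 'I_c) (i i' : 'I_n),
    x a + d *+ i <> om - x a' - d *+ i'.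
  move=> a a' i i' e.
  have := C2 a a' (ltn_ord a) (ltn_ord a') (- (i + i'))%R.
  by rewrite phiN // phiD // (aux e) eqxx.
move=> [[a i] b] [[a' i'] b'] /=; rewrite /F.
case: b; case: b' => e.
- have [-> ->] : a = a' /\ i = i'.
    apply: ff; apply: oppr_inj; apply: (@addrI _ om).
    by rewrite !opprD !addrA.
  by [].
- by case: (ft _ _ _ _ (esym e)).
- by case: (ft _ _ _ _ e).
- by have [-> ->] := ff _ _ _ _ e.
Qed.
End Greedy.

Lemma aux2 (G : zmodType) (xa dj om dd : G) :
  xa + dj + (om - xa - (dj - dd)) = om + dd.
Proof.
rewrite opprB (addrC dd) addrA [xa + dj + (om - xa)]addrA (addrAC (xa + dj)) (addrAC xa) subrr add0r addrACA subrr add0r //.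
Qed.

Open Scope group_scope.
Open Scope ring_scope.
Lemma omega_ex (G : finZmodType) (d : G) (n c : nat) :
  (0 < c)%N -> #[d]%g = n -> #|G| = (2 * n * c)%N ->
  exists w : G, forall (z : G) (i : nat), z *+ 2 - w != d *+ i.
Proof.
move=> c0 od cG.
pose H := <[d]>%G.
have nH : [set: G] \subset 'N(H)%g by apply: sub_abelian_norm; [exact: zmod_abelian | exact: subsetT].
have cQ : #|[set: coset_of H]| = (2 * c)%N.
  rewrite -quotientT card_quotient // -divgS ?subsetT // cardsT cG /= -/H.
  rewrite [#|H|]od.
  have n0 : (0 < n)%N by rewrite -od order_gt0.
  by rewrite mulnAC mulnC mulKn.
have dv : (2 %| #|[set: coset_of H]|)%N by rewrite cQ dvdn_mulr.
have [z zQ oz] := @Cauchy _ 2 [set: coset_of H] isT dv.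
pose sq := fun q : coset_of H => (q * q)%g.
have : ~~ [forall w, w \in [set sq q | q in [set: coset_of H]]].
  apply/negP => /forallP allw.
  have : [set sq q | q in [set: coset_of H]] = setT by apply/setP => w; rewrite inE allw.
  move=> e; have /imset_injP inj : #|[set sq q | q in [set: coset_of H]]| == #|[set: coset_of H]| by rewrite e.
  have z1 : z = 1%g.
    apply: inj; rewrite ?inE //.

    rewrite /sq mulg1; have := expg_order z; rewrite oz => <-; by rewrite expgS expg1.
  by move: oz; rewrite z1 order1.
move/forallPn => [w]; case: (cosetP w) => om _ -> Hw.
exists om => x i; apply/eqP => e.
move: Hw; apply/negP; rewrite negbK.
apply/imsetP; exists (coset H x); rewrite ?inE //.
have -> : om = (x * x * (d ^+ i)^-1)%g.
  rewrite zmodVgE zmodMgE zmodMgE zmodXgE -e; by rewrite mulr2n opprB addrC subrK.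
have nHx : forall y, y \in 'N(H)%g := fun y => subsetP nH y (in_setT y).
rewrite /sq !coset_morphM ?nHx //.
rewrite (coset_id (x := (d ^+ i)^-1)%g) ?mulg1 // groupV mem_cycle //.
Qed.

Lemma card1_eq (T : finType) (S : {set T}) x y :
  #|S| = 1%N -> x \in S -> y \in S -> x = y.
Proof. by move/eqP/cards1P => [z ->]; rewrite !inE => /eqP-> /eqP->. Qed.

Lemma neq_add1 n' (i : 'I_n'.+2) : (i == i + 1) = false.
Proof.
apply/negbTE; rewrite -{1}[i]addr0 (inj_eq (addrI i)) eq_sym; exact: one_neq0.
Qed.

Lemma forward n' c' (G : finZmodType) (A : arrays G n'.+2 n'.+2 c'.+1) :
  @is_MRS_sq G n'.+2 2 c'.+1 A -> @is_diagonal G n'.+2 2 c'.+1 A -> exists x : G, #[x]%g = n'.+2.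
Proof.
case=> Hall [Hr [Hc [om [del [Hrow Hcol]]]]] Hd.
pose a : 'I_c'.+1 := ord0.
have [t Ht] := Hd a.
have fill : forall i j, isSome (A a i j) = (j == i + t) || (j == i + t + 1).
  by move=> i j; rewrite Ht ex_diag2 inZp_ord.
pose X i := odflt 0 (A a i (i + t)); pose Y i := odflt 0 (A a i (i + t + 1)).
have R : forall i, X i + Y i = om.
  move=> i; rewrite -(Hrow a i) (sum2 (negbT (neq_add1 (i + t)))) // => j hj1 hj2.
  by have := fill i j; rewrite (negbTE hj1) (negbTE hj2); case: (A a i j).
have Cc : forall i, Y i + X (i + 1) = del.
  move=> i; rewrite -(Hcol a (i + t + 1)) (sum2 (negbT (neq_add1 i))).
    by rewrite /X (addrAC i 1 t).
  move=> k hk1 hk2; have := fill k (i + t + 1).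
  rewrite (addrAC i t 1) (inj_eq (addIr t)) eq_sym (negbTE hk2).
  rewrite -(addrAC i t 1) (inj_eq (addIr 1)) (inj_eq (addIr t)) eq_sym (negbTE hk1).
  by case: (A a k _).
pose e := del - om.
have step : forall i, X (i + 1) = X i + e.
  move=> i.
  have hY : Y i = om - X i by rewrite -(R i) [X i + Y i]addrC addrK.
  have h2 : X (i + 1) = del - Y i by rewrite -(Cc i) [Y i + _]addrC addrK.
  by rewrite h2 hY opprB addrCA.
have iter : forall k, X (inZp k) = X 0 + e *+ k.
  elim=> [|k IH]; first by rewrite inZp0 mulr0n addr0.
  by rewrite inZpS step IH mulrSr !addrA.
have en : e *+ n'.+2 = 0.
  by apply: (@addrI _ (X 0)); rewrite addr0 -iter inZpn.
have someX : forall i, A a i (i + t) = Some (X i).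
  move=> i; have := fill i (i + t); rewrite eqxx /X; by case: (A a i (i + t)).
have dist : forall k, (0 < k < n'.+2)%N -> e *+ k != 0.
  move=> k /andP [k0 kn]; apply/eqP => ek.
  have hX : X (inZp k) = X 0 by rewrite iter ek addr0.
  have := @card1_eq _ _ (a, 0, 0 + t) (a, inZp k, inZp k + t) (Hall (X 0)).
  rewrite !inE /= someX hX someX eqxx => /(_ isT isT) /(congr1 (fun p => val p.1.2)) /=.
  by rewrite modn_small // => k0'; move: k0; rewrite -k0'.
exists e.
have o1 : (#[e]%g %| n'.+2)%N by rewrite order_dvdn zmodXgE en.
apply/eqP; rewrite eqn_leq dvdn_leq //=; apply: contraT; rewrite -ltnNge => lt.
have := dist _ (introT andP (conj (order_gt0 e) lt)).
by rewrite -zmodXgE expg_order zmod1gE eqxx.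
Qed.

Lemma backward n' c' (G : finZmodType) :
  #|G| = (2 * n'.+2 * c'.+1)%N -> (exists x : G, #[x]%g = n'.+2) ->
  exists A : arrays G n'.+2 n'.+2 c'.+1,
    @is_MRS_sq G n'.+2 2 c'.+1 A /\ @is_diagonal G n'.+2 2 c'.+1 A.
Proof.
move=> cG [d od].
have hd : d *+ n'.+2 = 0 by rewrite -zmodXgE -od expg_order.
have hinj : forall i j : 'I_n'.+2, d *+ i = d *+ j -> i = j.
  move=> i j /eqP; rewrite -!zmodXgE eq_expg_mod_order od !modn_small // => /eqP.
  exact: val_inj.
have [om hom] := omega_ex (c := c'.+1) isT od cG.
have [x Cx] := greedy hd hom cG (leqnn c'.+1).
pose f := fun p : 'I_c'.+1 * 'I_n'.+2 * bool => F d om x p.1.1 p.1.2 p.2.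
have finj : injective f := F_inj hd hinj Cx.
have fsurj : forall g, exists p, f p = g.
  move=> g; have : g \in codom f.
    apply: inj_card_onto => //.
    by rewrite cG !card_prod !card_ord card_bool mulnC mulnA mulnAC.
  by case/codomP => p ->; exists p.
pose A : arrays G n'.+2 n'.+2 c'.+1 := fun a i j =>
  if j == i then Some (f (a, i, false))
  else if j == i + 1 then Some (f (a, i, true)) else None.
have sA : forall a i j, (A a i j != None) = (j == i) || (j == i + 1).
  by move=> a i j; rewrite /A; case: (j == i); case: (j == i + 1).
have iA : forall a i j, isSome (A a i j) = (j == i) || (j == i + 1).
  by move=> a i j; rewrite /A; case: (j == i); case: (j == i + 1).
have nsub : forall j : 'I_n'.+2, (j == j - 1) = false.
  by move=> j; rewrite eq_sym subr_eq neq_add1.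
have colE : forall i j : 'I_n'.+2, (j == i + 1) = (i == j - 1).
  by move=> i j; rewrite [i == _]eq_sym subr_eq.
exists A; split; last first.
  move=> a; exists ord0 => i j.
  rewrite ex_diag2 iA (_ : inZp (nat_of_ord (@ord0 n'.+1)) = 0) ?addr0 //.
  exact: val_inj.
split.
  move=> g; have [[[a i] b] <-] := fsurj g.
  apply/eqP/cards1P; exists (a, i, if b then i + 1 else i).
  apply/setP => -[[a' i'] j']; rewrite !inE /A /=.
  apply/idP/idP.
    case: ifP => [/eqP -> | _].
      by move/eqP => [] /finj [-> -> <-] /=.
    case: ifP => [/eqP -> | _] //.
    by move/eqP => [] /finj [-> -> <-] /=.
  move/eqP => [-> -> ->]; case: b => /=.
    by rewrite [i + 1 == i]eq_sym neq_add1 eqxx.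
  by rewrite eqxx.
split.
  move=> a i; rewrite (_ : [set j | A a i j != None] = [set i; i + 1]).
    by rewrite cards2 neq_add1.
  by apply/setP => j; rewrite !inE sA.
split.
  move=> a j; rewrite (_ : [set i | A a i j != None] = [set j; j - 1]).
    by rewrite cards2 nsub.
  by apply/setP => i; rewrite !inE sA colE eq_sym.
exists om, (om + d); split.
  move=> a i; rewrite (sum2 (negbT (neq_add1 i))).
    rewrite /A eqxx eq_sym neq_add1 eqxx /= /f /F /=.
    by rewrite -(addrA om) -opprD [LHS]addrC subrK.
  move=> k h1 h2; by rewrite /A (negbTE h1) (negbTE h2).
move=> a j; rewrite (sum2 (negbT (nsub j))).
  have e1 : f (a, j - 1, true) = om - x a - d *+ (j - 1)%R by [].
  have e0 : f (a, j, false) = x a + d *+ j by [].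
  rewrite /A eqxx nsub subrK eqxx /= e0 e1.
  by rewrite phiB // phi1 aux2.
move=> k h1 h2; by rewrite /A eq_sym (negbTE h1) colE (negbTE h2).
Qed.

Theorem theorem5p5 (n c : nat) (G : finZmodType) :
  (2 <= n)%N -> (1 <= c)%N -> #|G| = (2 * n * c)%N ->
  (exists A : arrays G n n c, @is_MRS_sq G n 2 c A /\ @is_diagonal G n 2 c A)
  <-> (exists x : G, #[x]%g = n).
Proof.
case: n => [|[|n']] //; case: c => [|c'] // _ _ cG.
split; first by case=> A [H1 H2]; exact: forward H1 H2.
exact: backward cG.
Qed.
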